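(* Let $(X,d)$ be a compact metric space and $\mathcal{W}$ a uniformly bounded open cover of $X$. Let $\mu=\sum_{i=1}^nm_i\delta_{x_i}\in\mathrm{Viet}^{\mathrm{m}}(\mathcal{W})$ (distinct $x_i$, $m_i>0$), let $\mathcal{U}=\{U_1,\dots,U_n\}$ be pairwise disjoint open subsets of $X$ with $x_i\in U_i$ and $\bigcup_iU_i$ contained in an element of $\mathcal{W}$, let $\varepsilon>0$, and let $B(\mu)=\tilde B(\mu)\cap\mathrm{Viet}^{\mathrm{m}}(\mathcal{W})$ where $\tilde B(\mu)$ is an open Wasserstein ball centered at $\mu$ in $P(X)$. Then the multivalued map $F\colon P_{\mathcal{U}}\cap B(\mu)\to P(X)$, $F(\zeta)=\{\nu\in P(\mu,\mathcal{U},\varepsilon) : \mathrm{supp}(\nu)\subseteq\mathrm{supp}(\zeta)\}$, is lower semi-continuous.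
   Context: $P(X)$ is the space of Borel probability measures on $X$ (weak topology, equivalently Wasserstein metric). $\mathrm{Viet}^{\mathrm{m}}(\mathcal{W})\subseteq P(X)$ is the set of finitely supported probability measures whose support is contained in some element of $\mathcal{W}$. For finitely supported $\nu=\sum_jw_j\delta_{a_j}$ and $Y\subseteq X$, $\nu(Y)=\sum_{a_j\in Y}w_j$. $P_U=\{\nu\in\mathrm{Viet}^{\mathrm{m}}(\mathcal{W}):\mathrm{supp}(\nu)\cap U\ne\varnothing\}$, $P_{\mathcal{U}}=\bigcap_iP_{U_i}$, $P(\mu,\mathcal{U},\varepsilon)=\{\nu\in\mathrm{Viet}^{\mathrm{m}}(\mathcal{W}) : \mathrm{supp}(\nu)\subseteq\bigcup_iU_i,\ |\nu(U_i)-\mu(U_i)|\le\varepsilon\ \forall i\}$. A multivalued map $F\colon A\to Y$ is lower semi-continuous if for every open $S\subseteq Y$ the set $\{a\in A: F(a)\cap S\ne\varnothing\}$ is open in $A$. *)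

(* Defs.v *)
From HB Require Import structures.
From mathcomp Require Import all_boot all_order all_algebra.
From mathcomp Require Import all_classical all_reals all_analysis.
Set Implicit Arguments. Unset Strict Implicit. Unset Printing Implicit Defensive.
Import Order.TTheory GRing.Theory Num.Theory.
Local Open Scope classical_set_scope.
Local Open Scope ring_scope.

Section Defs.
Variables (R : realType) (X : choiceType) (d : X -> X -> R).

Definition is_metric : Prop :=
  [/\ forall x y, 0 <= d x y,
      forall x y, d x y = 0 <-> x = y,
      forall x y, d x y = d y x &
      forall x y z, d x z <= d x y + d y z].

Definition dball (x : X) (r : R) : set X := [set y | d x y < r].

Definition dopen (U : set X) : Prop :=
  forall x, U x -> exists2 r : R, 0 < r & dball x r `<=` U.

Definition dcompact : Prop :=
  forall (I : Type) (G : I -> set X), (forall i, dopen (G i)) ->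
    setT `<=` \bigcup_(i in setT) G i ->
    exists2 J : set I, finite_set J & setT `<=` \bigcup_(i in J) G i.

Definition unif_bdd_open_cover (W : set (set X)) : Prop :=
  [/\ forall U, W U -> dopen U,
      setT `<=` \bigcup_(U in W) U &
      exists D : R, forall U, W U -> forall a b, U a -> U b -> d a b <= D].

(* A (finitely supported) measure is represented by its weight function. *)
Definition supp (T : Type) (nu : T -> R) : set T := [set x | nu x != 0].

Definition fsprob (nu : X -> R) : Prop :=
  [/\ forall x, 0 <= nu x, finite_set (supp nu) & \sum_(x \in supp nu) nu x = 1].

Definition VietM (W : set (set X)) (nu : X -> R) : Prop :=
  fsprob nu /\ exists2 U, W U & supp nu `<=` U.

Definition meas (nu : X -> R) (Y : set X) : R := \sum_(x \in supp nu `&` Y) nu x.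

Definition coupling (mu nu : X -> R) (pi : X * X -> R) : Prop :=
  [/\ forall z, 0 <= pi z,
      supp pi `<=` supp mu `*` supp nu,
      forall x, \sum_(y \in supp nu) pi (x, y) = mu x &
      forall y, \sum_(x \in supp mu) pi (x, y) = nu y].

Definition tcost (p : R) (pi : X * X -> R) : R :=
  \sum_(z \in supp pi) pi z * (d z.1 z.2 `^ p).

Definition wass (p : R) (mu nu : X -> R) : R :=
  (inf [set c | exists2 pi, coupling mu nu pi & c = tcost p pi]) `^ p^-1.

(* sets open in P(X) (W_p topology = weak topology), traced on the finitely
   supported probability measures *)
Definition open_fs (p : R) (S : set (X -> R)) : Prop :=
  forall nu, fsprob nu -> S nu ->
    exists2 r : R, 0 < r & forall nu', fsprob nu' -> wass p nu nu' < r -> S nu'.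

Definition open_in (p : R) (A T : set (X -> R)) : Prop :=
  T `<=` A /\
  forall z, T z ->
    exists2 r : R, 0 < r & forall z', A z' -> wass p z z' < r -> T z'.

Definition lsc (p : R) (A : set (X -> R)) (F : (X -> R) -> set (X -> R)) : Prop :=
  forall S, open_fs p S -> open_in p A [set a | A a /\ exists2 nu, F a nu & S nu].

Definition P_one (W : set (set X)) (U : set X) : set (X -> R) :=
  [set nu | VietM W nu /\ supp nu `&` U !=set0].

Definition P_fam (W : set (set X)) (n : nat) (U : 'I_n -> set X) : set (X -> R) :=
  [set nu | forall i, P_one W (U i) nu].

Definition P_mu (W : set (set X)) (mu : X -> R) (n : nat) (U : 'I_n -> set X)
  (eps : R) : set (X -> R) :=
  [set nu | [/\ VietM W nu, supp nu `<=` \bigcup_(i in setT) U i &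
             forall i, `|meas nu (U i) - meas mu (U i)| <= eps]].

End Defs.

(* Main.v *)
Require Import Defs.
From HB Require Import structures.
From mathcomp Require Import all_boot all_order all_algebra.
From mathcomp Require Import all_classical all_reals all_analysis.
From mathcomp Require Import lra.
Import Order.TTheory GRing.Theory Num.Theory.
Local Open Scope classical_set_scope.
Local Open Scope ring_scope.

Set Implicit Arguments. Unset Strict Implicit.


Section H.
Variables (R : realType).

Lemma useq (T : choiceType) (A : set T) : finite_set A ->
  exists s : seq T, uniq s /\ A = [set` s].
Proof.
move=> /finite_seqP[s ->]; exists (undup s); split; first exact: undup_uniq.
by apply/seteqP; split=> y /=; rewrite mem_undup.
Qed.

Lemma sum_seq (T : choiceType) (A : set T) s (f : T -> R) :
  uniq s -> A = [set` s] -> \sum_(x \in A) f x = \sum_(x <- s) f x.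
Proof. by move=> us ->; rewrite [RHS]fsbig_seq. Qed.

Lemma sumI_seq (T : choiceType) (A Y : set T) s (f : T -> R) :
  uniq s -> A = [set` s] ->
  \sum_(x \in A `&` Y) f x = \sum_(x <- s | `[< Y x >]) f x.
Proof.
move=> us eA; rewrite [RHS]big_mkcond /=.
rewrite (eq_fsbigr (fun x => if `[< Y x >] then f x else 0)); last first.
  by move=> x; rewrite inE => -[_ Yx]; rewrite asboolT.
apply: (fsbig_fwiden s) => //.
  by move=> x [Ax _]; rewrite eA in Ax.
move=> x [/= xs nAY]; rewrite /preimage/=; case: asboolP => // Yx.
by exfalso; apply: nAY; split=> //; rewrite eA.
Qed.

Lemma sum_pair (X : choiceType) (sA sB : seq X) (pi g : X * X -> R) :
  uniq sA -> uniq sB ->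
  supp pi `<=` [set` sA] `*` [set` sB] -> (forall w, pi w = 0 -> g w = 0) ->
  \sum_(w \in supp pi) g w = \sum_(x <- sA) \sum_(y <- sB) g (x, y).
Proof.
move=> uA uB sp g0; rewrite -big_allpairs.
apply: fsbig_fwiden.
- move=> -[a b] /sp [/= h1 h2]; exact: allpairs_f.
- by apply: allpairs_uniq => // -[? ?] [? ?] _ _ [-> ->].
- move=> w [_ nw]; apply: g0; apply/eqP.
  by have := nw; rewrite /supp/= => /negP; rewrite negbK.
Qed.

Lemma finite_min (T : choiceType) (A : set T) (P : T -> R -> Prop) :
  finite_set A -> (forall a r r', P a r -> 0 < r' <= r -> P a r') ->
  (forall a, A a -> exists2 r, 0 < r & P a r) ->
  exists2 r, 0 < r & forall a, A a -> P a r.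
Proof.
move=> /finite_seqP[s ->] Pmono; elim: s => [|y s IH] H.
  by exists 1.
have [r1 r10 P1] := H y (mem_head _ _).
have [r2 r20 P2] : exists2 r, 0 < r & forall a, a \in s -> P a r.
  by apply: IH => a As; apply: H; rewrite /= in_cons As orbT.
exists (Num.min r1 r2); first by rewrite lt_min r10 r20.
move=> a; rewrite /= in_cons => /orP[/eqP aeq|As]; first subst a.
  by apply: Pmono P1 _; rewrite lt_min r10 r20 ge_min lexx.
by apply: Pmono (P2 _ As) _; rewrite lt_min r10 r20 ge_min lexx orbT.
Qed.

Lemma le_sum_seq (T : eqType) (s : seq T) x (F : T -> R) :
  x \in s -> uniq s -> (forall y, 0 <= F y) -> F x <= \sum_(y <- s) F y.
Proof.
move=> xs us F0; rewrite (bigD1_seq x) //= lerDl; exact: sumr_ge0.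
Qed.

Lemma sum_ind (T : eqType) (s : seq T) (a0 : T) (v : R) :
  uniq s -> \sum_(b <- s) (if a0 == b then v else 0) = if a0 \in s then v else 0.
Proof.
elim: s => [|y s IH]; first by rewrite big_nil.
rewrite /= big_cons in_cons => /andP[ys us]; rewrite IH //.
case: eqP => [->|_] /=; last by rewrite add0r.
by rewrite (negbTE ys) addr0.
Qed.


End H.
Section W.
Variables (R : realType) (X : choiceType) (d : X -> X -> R).

Lemma tcost_ge0 p (pi : X * X -> R) : (forall w, 0 <= pi w) -> 0 <= tcost d p pi.
Proof. by move=> h; apply: fsumr_ge0 => w _; rewrite mulr_ge0 // powR_ge0. Qed.

Let Cset p mu nu := [set c | exists2 pi, coupling mu nu pi & c = tcost d p pi].

Lemma Cset_lb p mu nu : lbound (Cset p mu nu) 0.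
Proof. by move=> c [pi [h0 _ _ _] ->]; exact: tcost_ge0. Qed.

Lemma wass_le p mu nu pi : 0 < p -> coupling mu nu pi ->
  wass d p mu nu <= (tcost d p pi) `^ p^-1.
Proof.
move=> p0 cp; rewrite /wass; apply: ge0_ler_powR.
- by rewrite invr_ge0 ltW.
- rewrite /= nnegrE; apply: lb_le_inf; last exact: Cset_lb.
  by exists (tcost d p pi), pi.
- by rewrite nnegrE; case: cp => h0 _ _ _; exact: tcost_ge0.
- apply: ge_inf; first by exists 0; exact: Cset_lb.
  by exists pi.
Qed.

Lemma wass_lt p mu nu v : 0 < p -> 0 <= v -> (exists pi, coupling mu nu pi) ->
  wass d p mu nu < v `^ p^-1 -> exists2 pi, coupling mu nu pi & tcost d p pi < v.
Proof.
move=> p0 v0 [pi cp]; rewrite /wass => hw.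
have ne : Cset p mu nu !=set0 by exists (tcost d p pi), pi.
have K0 : 0 <= inf (Cset p mu nu) by apply: lb_le_inf => //; exact: Cset_lb.
have : inf (Cset p mu nu) < v.
  rewrite ltNge; apply/negP => vK.
  have : v `^ p^-1 <= inf (Cset p mu nu) `^ p^-1.
    by apply: (@ge0_ler_powR R p^-1) => //; rewrite ?nnegrE ?invr_ge0 ?(ltW p0).
  by move=> h; have := lt_le_trans hw h; rewrite ltxx.
by move=> /(inf_lt ne)[c [pi' cp' ->] lt]; exists pi'.
Qed.

Lemma coupling_ex (mu nu : X -> R) : fsprob mu -> fsprob nu ->
  exists pi, coupling mu nu pi.
Proof.
move=> [m0 _ m1] [n0 _ n1]; exists (fun w => mu w.1 * nu w.2); split.
- by move=> w; rewrite mulr_ge0.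
- move=> [a b]; rewrite /supp /= mulf_eq0 negb_or => /andP[ha hb]; by split.
- by move=> x /=; rewrite -mulr_fsumr n1 mulr1.
- by move=> y /=; rewrite -mulr_fsuml m1 mul1r.
Qed.

End W.


Unset Implicit Arguments. Set Strict Implicit.

Theorem proposition4p9 (R : realType) (X : choiceType) (d : X -> X -> R)
  (hmetric : is_metric d) (hcompact : dcompact d)
  (W : set (set X)) (hW : unif_bdd_open_cover d W)
  (n : nat) (x : 'I_n -> X) (m : 'I_n -> R)
  (hx : injective x) (hm : forall i, 0 < m i)
  (mu : X -> R) (hmu : mu = fun y => \sum_(i < n) (if x i == y then m i else 0))
  (hmuV : VietM W mu)
  (U : 'I_n -> set X) (hUopen : forall i, dopen d (U i))
  (hUdisj : forall i j, i != j -> U i `&` U j = set0)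
  (hxU : forall i, U i (x i))
  (hUW : exists2 W0, W W0 & \bigcup_(i in setT) U i `<=` W0)
  (eps : R) (heps : 0 < eps)
  (p : R) (hp : 1 <= p) (r : R) (hr : 0 < r) :
  let B := [set z | VietM W z /\ wass d p mu z < r] in
  lsc d p (P_fam W U `&` B)
    (fun zeta => [set nu | P_mu W mu U eps nu /\ supp nu `<=` supp zeta]).
Proof.
move=> B S Sopen; split; first by move=> z [].
move=> z [Az [nu [[hV hsU hmeas] hsz] Snu]].
have d0 : forall a b, 0 <= d a b by case: hmetric.
have p0 : 0 < p by apply: lt_le_trans hp.
case: (Az) => Pz [[fz _] _].
case: (fz) => z0 zfin z1.
case: (hV) => fnu _.
case: (fnu) => nu0 nufin nu1.
have [r0 r00 Sr0] := Sopen nu fnu Snu.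
pose Pr a (rr : R) := exists i, U i a /\ dball d a rr `<=` U i.
have Pmono : forall a r1 r', Pr a r1 -> 0 < r' <= r1 -> Pr a r'.
  move=> a r1 r' [i [h2 h3]] /andP[r'0 r'r]; exists i; split => // y.
  rewrite /dball /= => hy; apply: h3; rewrite /dball/=; exact: lt_le_trans hy r'r.
have [rho1 rho10 Hrho1] : exists2 rho : R, 0 < rho & forall a, supp nu a -> Pr a rho.
  apply: finite_min => //.
  move=> a /hsU [i _ Uia]; have [ra ra0 hra] := hUopen i a Uia.
  by exists ra => //; exists i.
pose rho := Num.min rho1 (r0 / 2).
have rho0 : 0 < rho by rewrite lt_min rho10 divr_gt0.
have rhor0 : rho < r0 by rewrite gt_min; apply/orP; right; lra.
have Hrho : forall a, supp nu a -> Pr a rho.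
  by move=> a sa; apply: Pmono (Hrho1 a sa) _; rewrite rho0 ge_min lexx.
have [c c0 Hc] : exists2 c : R, 0 < c & forall a, supp nu a -> c <= z a.
  apply: finite_min => //.
    by move=> a r1 r' h /andP[_ h']; exact: le_trans h' h.
  move=> a sa; exists (z a) => //; have za := hsz a sa.
  by rewrite lt_neqAle eq_sym za z0.
exists ((c * rho `^ p) `^ p^-1).
  by apply: powR_gt0; rewrite mulr_gt0 // powR_gt0.
move=> z' Az' hw.
case: (Az') => Pz' [[fz' _] _].
case: (fz') => z'0 z'fin z'1.
have [pi cpi hpi] := @wass_lt R X d p z z' (c * rho `^ p) p0
   (ltW (mulr_gt0 c0 (powR_gt0 _ rho0))) (coupling_ex fz fz') hw.
have [sz [usz esz]] := useq zfin.
have [sz' [usz' esz']] := useq z'fin.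
have Hnear : forall a, supp nu a -> exists b, supp z' b /\ d a b < rho.
  move=> a sa; apply: contrapT => hno.
  have hall : forall b, supp z' b -> rho <= d a b.
    move=> b sb; rewrite leNgt; apply/negP => hb; apply: hno; exists b; by split.
  have : c * rho `^ p <= tcost d p pi.
    case: (cpi) => pi0 hs m1 _.
    rewrite /tcost (sum_pair (sA:=sz) (sB:=sz')) //; last first.
      - by move=> w ->; rewrite mul0r.
      - by rewrite -esz -esz'.
    have asz : a \in sz by have := hsz a sa; rewrite esz.
    apply: le_trans (le_sum_seq (F := fun x => \sum_(y <- sz') pi (x, y) * d (x,y).1 (x,y).2 `^ p) asz usz _); last first.
      by move=> x0; apply: sumr_ge0 => y _; rewrite mulr_ge0 // powR_ge0.
    apply: le_trans (_ : z a * rho `^ p <= _).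
      by rewrite ler_wpM2r ?powR_ge0 ?Hc.
    have -> : z a = \sum_(y <- sz') pi (a,y) by rewrite -m1 (sum_seq _ usz' esz').
    rewrite big_distrl /= big_seq [X in _ <= X]big_seq; apply: ler_sum => y ys.
    apply: ler_wpM2l => //; apply: (@ge0_ler_powR R p) => //; rewrite ?nnegrE ?(ltW p0) ?(ltW rho0) //.
    by apply: hall; rewrite esz'.
  by move=> h; have := lt_le_trans hpi h; rewrite ltxx.
have [f hf] : exists f : X -> X, forall a, supp nu a -> supp z' (f a) /\ d a (f a) < rho.
  have [g hg] := choice (P := fun a b => supp nu a -> supp z' b /\ d a b < rho) (fun a =>
    match pselect (supp nu a) with
    | left sa => let: ex_intro b hb := Hnear a sa in ex_intro _ b (fun _ => hb)
    | right ns => ex_intro _ a (fun h => False_ind _ (ns h))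
    end).
  by exists g.
have [snu [usnu esnu]] := useq nufin.
have snuE : forall a, supp nu a <-> a \in snu by move=> a; rewrite esnu.
pose su' := undup (map f snu).
have usu' : uniq su' by exact: undup_uniq.
pose nu' := fun b => \sum_(a <- snu) (if f a == b then nu a else 0).
have nu'0 : forall b, 0 <= nu' b by move=> b; apply: sumr_ge0 => a _; case: ifP.
have nupos : forall a, a \in snu -> 0 < nu a.
  by move=> a /snuE ha; rewrite lt_neqAle eq_sym ha nu0.
have suppE : supp nu' = [set` su'].
  apply/seteqP; split => b /=.
  - rewrite /supp/= => hb; rewrite mem_undup; apply/mapP.
    have /hasP [a ha hfa] : has (fun a => f a == b) snu.
      rewrite -[has _ _]negbK; apply/negP => /hasPn hn; move: hb.
      by rewrite /nu' big1_seq ?eqxx // => a /andP[_ ha]; rewrite (negbTE (hn a ha)).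
    by exists a => //; rewrite (eqP hfa).
  - rewrite mem_undup => /mapP [a ha ->]; rewrite /supp/=.
    have h : nu a <= nu' (f a).
      have := le_sum_seq (F := fun a' => if f a' == f a then nu a' else 0) ha usnu.
      by rewrite eqxx; apply => y; case: ifP.
    by rewrite gt_eqF // (lt_le_trans (nupos a ha) h).
have sumY : forall Y : set X, (forall a, a \in snu -> (Y (f a) <-> Y a)) ->
    \sum_(b \in supp nu' `&` Y) nu' b = \sum_(a \in supp nu `&` Y) nu a.
  move=> Y hY; rewrite (sumI_seq _ _ usu' suppE) (sumI_seq _ _ usnu esnu).
  rewrite /nu' exchange_big /= [RHS]big_mkcond /=; apply: eq_big_seq => a ha.
  rewrite -big_filter sum_ind ?filter_uniq // mem_filter mem_undup map_f // andbT.
  case: (asboolP (Y (f a))) => h1; case: (asboolP (Y a)) => h2 //; exfalso.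
    by apply: h2; apply/(hY a ha).
  by apply: h1; apply/(hY a ha).
have sum1 : \sum_(b \in supp nu') nu' b = 1.
  have h := sumY setT (fun a _ => ltac:(by split)).
  by rewrite !setIT in h; rewrite h.
have hU : forall a, a \in snu -> exists j, U j a /\ U j (f a).
  move=> a ha; have sa : supp nu a by apply/snuE.
  have [j [Uja hj]] := Hrho a sa; exists j; split => //; apply: hj.
  by rewrite /dball/=; exact: (hf a sa).2.
have hUi : forall i a, a \in snu -> (U i (f a) <-> U i a).
  move=> i a ha; have [j [Uja Ujf]] := hU a ha.
  case: (eqVneq i j) => [->|ij]; first by split.
  have hd := hUdisj i j ij.
  split => h; exfalso.
    by move: (conj h Ujf : (U i `&` U j) (f a)); rewrite hd.
  by move: (conj h Uja : (U i `&` U j) a); rewrite hd.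
have fnu' : fsprob nu' by split => //; rewrite suppE.
pose pi' := fun w : X * X => if f w.1 == w.2 then nu w.1 else 0.
have cpi' : coupling nu nu' pi'.
  split.
  - by move=> w; rewrite /pi'; case: ifP.
  - move=> [a b]; rewrite /supp/= /pi'/=; case: (eqVneq (f a) b) => [<-|ne]; last by move=> /negP; rewrite eqxx.
    move=> na; split => //; have h : supp nu' (f a) by rewrite suppE /= mem_undup map_f //; exact/snuE.
    exact: h.
  - move=> x0 /=; rewrite (sum_seq _ usu' suppE) /pi' /= sum_ind //.
    case: ifP => // hx0; apply/esym/eqP; apply: contraFT hx0 => nx.
    by rewrite mem_undup map_f //; apply/snuE.
  - by move=> y /=; rewrite (sum_seq _ usnu esnu).
have tc : tcost d p pi' <= rho `^ p.
  case: (cpi') => pi'0 hs m1 _.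
  rewrite /tcost (sum_pair (sA:=snu) (sB:=su')) //; last first.
    - by move=> w ->; rewrite mul0r.
    - by rewrite -esnu -suppE.
  apply: le_trans (_ : \sum_(a <- snu) \sum_(b <- su') pi' (a,b) * rho `^ p <= _).
    rewrite big_seq [X in _ <= X]big_seq; apply: ler_sum => a ha; apply: ler_sum => b _ /=.
    rewrite /pi' /=; case: eqP => [<-|_]; last by rewrite !mul0r.
    apply: ler_wpM2l => //; apply: (@ge0_ler_powR R p) => //; rewrite ?nnegrE ?(ltW p0) ?(ltW rho0) //.
    by apply: ltW; apply: (hf a _).2; apply/snuE.
  have e : forall a, a \in snu -> \sum_(b <- su') pi' (a,b) * rho `^ p = nu a * rho `^ p.
    by move=> a ha; rewrite -big_distrl /= -(m1 a) (sum_seq _ usu' suppE).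
  by rewrite (eq_big_seq _ e) -big_distrl /= -(sum_seq _ usnu esnu) nu1 mul1r.
have wle : wass d p nu nu' < r0.
  apply: le_lt_trans (@wass_le R X d p nu nu' pi' p0 cpi') _.
  have e : (rho `^ p) `^ p^-1 = rho.
    by rewrite -powRrM mulfV ?gt_eqF // powRr1 // ltW.
  apply: le_lt_trans rhor0; rewrite -[X in _ <= X]e.
  apply: (@ge0_ler_powR R p^-1) => //; rewrite ?nnegrE ?invr_ge0 ?(ltW p0) ?powR_ge0 //.
  by apply: tcost_ge0; case: cpi'.
split; first exact: Az'.
exists nu'; last exact: Sr0.
have [W0 hW0 hsub] := hUW.
have sU : supp nu' `<=` \bigcup_(i in setT) U i.
  move=> b; rewrite suppE /= mem_undup => /mapP [a ha ->].
  by have [j [_ Ujf]] := hU a ha; exists j.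
split; first split.
- split => //; exists W0 => //; exact: subset_trans sU hsub.
- exact: sU.
- by move=> i; rewrite /meas sumY; [exact: hmeas | exact: hUi].
- move=> b; rewrite suppE /= mem_undup => /mapP [a ha ->].
  by apply: (hf a _).1; apply/snuE.
Qed.
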